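(* Let $F,K\ge1$ and $0\le Z<F$ be integers. If some element of $S$ occupies exactly $Z+1$ cells of an $S$-PDA$(F,K,Z)$, then $|S|\ge (F-Z-1)(Z+1)+1$.
   Context: A placement delivery array $S$-PDA$(F,K,Z)$ is an $F\times K$ array $R=(r_{j,k})$, $1\le j\le F$, $1\le k\le K$, over a finite set $S$ such that: (1) each cell is either empty or contains an element of $S$; (2) each column contains exactly $Z$ empty cells; (3) each element of $S$ occurs at most once in each row and at most once in each column; (4) if two distinct nonempty cells satisfy $r_{j_1,k_1}=r_{j_2,k_2}=t\in S$, then the cells $r_{j_1,k_2}$ and $r_{j_2,k_1}$ are empty. *)

(* Defs.v *)
From mathcomp Require Import all_boot.
Set Implicit Arguments. Unset Strict Implicit. Unset Printing Implicit Defensive.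

(* An F x K array over S: None = empty cell, Some s = cell containing s. *)
Definition array (S : finType) (F K : nat) := 'I_F -> 'I_K -> option S.

Definition is_PDA (S : finType) (F K Z : nat) (R : array S F K) : Prop :=
  (forall k : 'I_K, #|[set j : 'I_F | R j k == None]| = Z) /\
  (forall (j : 'I_F) (k1 k2 : 'I_K) (t : S),
      R j k1 = Some t -> R j k2 = Some t -> k1 = k2) /\
  (forall (j1 j2 : 'I_F) (k : 'I_K) (t : S),
      R j1 k = Some t -> R j2 k = Some t -> j1 = j2) /\
  (forall (j1 j2 : 'I_F) (k1 k2 : 'I_K) (t : S),
      (j1, k1) <> (j2, k2) ->
      R j1 k1 = Some t -> R j2 k2 = Some t ->
      R j1 k2 = None /\ R j2 k1 = None).

Definition occurrences (S : finType) (F K : nat) (R : array S F K) (s : S) : nat :=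
  #|[set p : 'I_F * 'I_K | R p.1 p.2 == Some s]|.

(* Main.v *)
Require Import Defs.
From mathcomp Require Import all_boot.
From mathcomp Require Import zify.

Theorem mainTheorem13 (S : finType) (F K Z : nat) (R : array S F K) :
  1 <= F -> 1 <= K -> Z < F ->
  @is_PDA S F K Z R ->
  (exists s : S, @occurrences S F K R s = Z.+1) ->
  (F - Z - 1) * Z.+1 + 1 <= #|S|.
Proof.
move=> _ _ ZF [Hcol [Hrow [Hcl H4]]] [s Hs].
rewrite /occurrences in Hs.
set P := [set p : 'I_F * 'I_K | R p.1 p.2 == Some s] in Hs.
set J := [set p.1 | p in P].
set Kc := [set p.2 | p in P].
have inP p : (p \in P) = (R p.1 p.2 == Some s) by rewrite inE.
have cJ : #|J| = Z.+1.
  rewrite card_in_imset // => p q; rewrite !inP => /eqP Hp /eqP Hq E.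
  move: Hq; rewrite -E => Hq; have := Hrow _ _ _ _ Hp Hq.
  by case: p q E {Hp Hq} => a b [c d] /= -> ->.
have cK : #|Kc| = Z.+1.
  rewrite card_in_imset // => p q; rewrite !inP => /eqP Hp /eqP Hq E.
  move: Hq; rewrite -E => Hq; have := Hcl _ _ _ _ Hp Hq.
  by case: p q E {Hp Hq} => a b [c d] /= -> ->.
have NE j k : j \notin J -> k \in Kc -> R j k <> None.
  move=> jJ /imsetP [p pP ->] Hn.
  have Hp : R p.1 p.2 = Some s by apply/eqP; rewrite -inP.
  have sub : j |: (J :\ p.1) \subset [set i | R i p.2 == None].
    apply/subsetP => i; rewrite !inE => /orP [/eqP -> | /andP [ip /imsetP [q qP Ei]]]; last subst i.
      by rewrite Hn.
    have Hq : R q.1 q.2 = Some s by apply/eqP; rewrite -inP.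
    have nq : (q.1, q.2) <> (p.1, p.2) by case=> E _; move: ip; rewrite E eqxx.
    by have [-> _] := H4 _ _ _ _ _ nq Hq Hp.
  have := subset_leq_card sub; rewrite Hcol cardsU1 !inE negb_and jJ orbT /=.
  have pJ : p.1 \in J by apply/imsetP; exists p.
  have := cardsD1 p.1 J; rewrite pJ cJ /= => E; lia.
set D := setX (~: J) Kc.
set f := fun p : 'I_F * 'I_K => odflt s (R p.1 p.2).
have Df p : p \in D -> R p.1 p.2 = Some (f p).
  rewrite inE => /andP [a b]; rewrite /f.
  case E: (R p.1 p.2) => [t|] //; exfalso; apply: (NE _ _ _ b E).
  by rewrite inE in a.
have finj : {in D &, injective f}.
  move=> p q pD qD E; have Hp := Df _ pD; have Hq := Df _ qD; rewrite -E in Hq.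
  case: (p =P q) => // npq; exfalso.
  have npq' : (p.1, p.2) <> (q.1, q.2) by case: p q {pD qD E Hp Hq} npq => ? ? [? ?].
  have [H _] := H4 _ _ _ _ _ npq' Hp Hq.
  move: pD qD; rewrite !inE => /andP [a _] /andP [_ b].
  by apply: (NE _ _ a b).
have sD : s \notin f @: D.
  apply/imsetP => [[p pD E]]; have Hp := Df _ pD; rewrite -E in Hp.
  move: pD; rewrite !inE => /andP [a _]; move/negP: a; apply.
  by apply/imsetP; exists p => //; rewrite inP Hp.
have := max_card (s |: f @: D); rewrite cardsU1 sD card_in_imset //.
rewrite cardsX cardsCs setCK cJ cK card_ord => H.
lia.
Qed.
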